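(* Let $p$ be an odd prime and $\alpha$ an integer with $1\le\alpha<p$. Let $a,b,c$ be non-zero integers with $\gcd(a,b,c)=1$ satisfying $a^p+2^\alpha b^p+c^p=0$ and normalized so that $a\equiv -1 \pmod 4$. Put $A=a^p$, $B=2^\alpha b^p$, and let $E$ be the elliptic curve over $\mathbb{Q}$ given by $y^2=x(x-A)(x+B)$. If $(a,b,c)\neq(-1,1,-1)$, then $E$ has multiplicative reduction at some prime $q\neq 2$. *)

(* Defs.v *)
From HB Require Import structures.
From mathcomp Require Import all_boot all_order all_algebra.
Set Implicit Arguments. Unset Strict Implicit. Unset Printing Implicit Defensive.
Import Order.TTheory GRing.Theory Num.Theory.
Local Open Scope ring_scope.

(* Weierstrass equation y^2 + a1 xy + a3 y = x^3 + a2 x^2 + a4 x + a6 over Q *)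
Record weier := Weier { wa1 : rat; wa2 : rat; wa3 : rat; wa4 : rat; wa6 : rat }.

Definition wb2 (E : weier) := wa1 E ^+ 2 + 4%:R * wa2 E.
Definition wb4 (E : weier) := 2%:R * wa4 E + wa1 E * wa3 E.
Definition wb6 (E : weier) := wa3 E ^+ 2 + 4%:R * wa6 E.
Definition wb8 (E : weier) :=
  wa1 E ^+ 2 * wa6 E + 4%:R * wa2 E * wa6 E - wa1 E * wa3 E * wa4 E
  + wa2 E * wa3 E ^+ 2 - wa4 E ^+ 2.
Definition wc4 (E : weier) := wb2 E ^+ 2 - 24%:R * wb4 E.
Definition wdisc (E : weier) :=
  - wb2 E ^+ 2 * wb8 E - 8%:R * wb4 E ^+ 3 - 27%:R * wb6 E ^+ 2
  + 9%:R * wb2 E * wb4 E * wb6 E.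

(* E' is obtained from E by the change of variables
   x = u^2 x' + r, y = u^3 y' + s u^2 x' + t  (u <> 0), i.e. E ~=_Q E'. *)
Definition wiso (E E' : weier) : Prop :=
  exists u r s t : rat, u != 0 /\
    u * wa1 E' = wa1 E + 2%:R * s /\
    u ^+ 2 * wa2 E' = wa2 E - s * wa1 E + 3%:R * r - s ^+ 2 /\
    u ^+ 3 * wa3 E' = wa3 E + r * wa1 E + 2%:R * t /\
    u ^+ 4 * wa4 E' = wa4 E - s * wa3 E + 2%:R * r * wa2 E
                      - (t + r * s) * wa1 E + 3%:R * r ^+ 2 - 2%:R * s * t /\
    u ^+ 6 * wa6 E' = wa6 E + r * wa4 E + r ^+ 2 * wa2 E + r ^+ 3
                      - t * wa3 E - t ^+ 2 - r * t * wa1 E.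

(* q-adic valuation of a rational (0 for x = 0; only used on nonzero x) *)
Definition qval (q : nat) (x : rat) : int :=
  (logn q `|numq x|%N)%:Z - (logn q `|denq x|%N)%:Z.

Definition qint (q : nat) (x : rat) : bool := ~~ (q %| `|denq x|)%N.

Definition wintegral (q : nat) (E : weier) : Prop :=
  [/\ qint q (wa1 E), qint q (wa2 E), qint q (wa3 E), qint q (wa4 E)
    & qint q (wa6 E)].

Definition qdvd (q : nat) (x : rat) : bool := (q %| `|numq x|)%N.

Definition wminimal (q : nat) (E : weier) : Prop :=
  wintegral q E /\
  forall E', wiso E E' -> wintegral q E' -> qval q (wdisc E) <= qval q (wdisc E').

(* E has multiplicative reduction at q: the reduction mod q of a minimal
   model at q is singular (q | Delta) with a node (q does not divide c4). *)
Definition mult_reduction (q : nat) (E : weier) : Prop :=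
  exists E', [/\ wiso E E', wminimal q E', qdvd q (wdisc E') & ~~ qdvd q (wc4 E')].

(* The Frey curve y^2 = x(x - A)(x + B) = x^3 + (B - A) x^2 - A B x *)
Definition frey_curve (A B : rat) : weier := Weier 0 (B - A) 0 (- (A * B)) 0.

(* Main.v *)
Require Import Defs.
From HB Require Import structures.
From mathcomp Require Import all_boot all_order all_algebra.
From mathcomp Require Import ring lra zify.
Import Order.TTheory GRing.Theory Num.Theory.
Set Implicit Arguments. Unset Strict Implicit.
Local Open Scope ring_scope.

Lemma num_den_eq (x : rat) (n d : int) :
  x * d%:~R = n%:~R -> numq x * d = n * denq x.
Proof.
move=> h; apply: (@intr_inj rat); rewrite !rmorphM /= numqE -h; ring.
Qed.

Lemma qval_frac (q : nat) (x : rat) (n d : int) :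
  n != 0 -> d != 0 -> x * d%:~R = n%:~R ->
  qval q x = (logn q `|n|)%:Z - (logn q `|d|)%:Z.
Proof.
move=> n0 d0 h.
have e := num_den_eq h.
have nx0 : numq x != 0.
  apply/eqP=> nx; move: e; rewrite nx mul0r => /esym/eqP.
  by rewrite mulf_eq0 (negPf n0) denq_eq0.
have := congr1 (fun z : int => logn q `|z|) e => /=.
rewrite !abszM lognM ?absz_gt0 // lognM ?absz_gt0 ?denq_eq0 //.
rewrite /qval; lia.
Qed.

Definition qrep (q : nat) (x : rat) :=
  exists n d : int, ~~ (q %| `|d|)%N /\ x * d%:~R = n%:~R.

Lemma qint_rep q x : qint q x -> qrep q x.
Proof. by move=> h; exists (numq x), (denq x); rewrite numqE. Qed.

Lemma rep_qint q x : qrep q x -> qint q x.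
Proof.
case=> n [d [qd h]]; apply/negP => qden; move/negP: qd; apply.
have e := num_den_eq h.
have : (`|denq x| %| `|numq x| * `|d|)%N.
  by rewrite -abszM e abszM dvdn_mull.
rewrite Gauss_dvdr; last by rewrite coprime_sym coprime_num_den.
by move/(dvdn_trans qden).
Qed.

Section Rep.
Variable q : nat.
Hypothesis pq : prime q.

Lemma qrep_int (z : int) : qrep q z%:~R.
Proof.
exists z, 1; split; last by rewrite mulr1.
by rewrite /= dvdn1; apply/eqP=> e; move: pq; rewrite e.
Qed.

Lemma qrep_nat (k : nat) : qrep q k%:R.
Proof. by have := qrep_int k; rewrite -pmulrn. Qed.

Lemma qrep_add x y : qrep q x -> qrep q y -> qrep q (x + y).
Proof.
case=> n1 [d1 [q1 h1]] [n2 [d2 [q2 h2]]].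
exists (n1 * d2 + n2 * d1), (d1 * d2); split.
  by rewrite abszM Euclid_dvdM // negb_or q1 q2.
rewrite rmorphD !rmorphM /= -h1 -h2; ring.
Qed.

Lemma qrep_mul x y : qrep q x -> qrep q y -> qrep q (x * y).
Proof.
case=> n1 [d1 [q1 h1]] [n2 [d2 [q2 h2]]].
exists (n1 * n2), (d1 * d2); split.
  by rewrite abszM Euclid_dvdM // negb_or q1 q2.
rewrite !rmorphM /= -h1 -h2; ring.
Qed.

Lemma qrep_opp x : qrep q x -> qrep q (- x).
Proof.
case=> n1 [d1 [q1 h1]]; exists (- n1), d1; split => //.
by rewrite rmorphN /= -h1; ring.
Qed.

Lemma qrep_sub x y : qrep q x -> qrep q y -> qrep q (x - y).
Proof. by move=> hx hy; apply: qrep_add => //; apply: qrep_opp. Qed.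

Lemma qrep_exp x k : qrep q x -> qrep q (x ^+ k).
Proof.
move=> hx; elim: k => [|k ih]; first by rewrite expr0; apply: (qrep_int 1).
by rewrite exprS; apply: qrep_mul.
Qed.

End Rep.
Definition c4f (a1 a2 a3 a4 a6 : rat) :=
  wc4 (Weier a1 a2 a3 a4 a6).
Definition discf (a1 a2 a3 a4 a6 : rat) :=
  wdisc (Weier a1 a2 a3 a4 a6).

Lemma wiso_inv E E' : wiso E E' ->
  exists u : rat, [/\ u != 0, u ^+ 4 * wc4 E' = wc4 E & u ^+ 12 * wdisc E' = wdisc E].
Proof.
case=> u [r [s [t [u0 [h1 [h2 [h3 [h4 h6]]]]]]]].
exists u; split => //.
  have -> : u ^+ 4 * wc4 E' = c4f (u * wa1 E') (u ^+ 2 * wa2 E') (u ^+ 3 * wa3 E')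
        (u ^+ 4 * wa4 E') (u ^+ 6 * wa6 E').
    by rewrite /c4f /wc4 /wb2 /wb4 /=; ring.
  rewrite h1 h2 h3 h4 h6 /c4f /wc4 /wb2 /wb4 /=; ring.
have -> : u ^+ 12 * wdisc E' = discf (u * wa1 E') (u ^+ 2 * wa2 E') (u ^+ 3 * wa3 E')
      (u ^+ 4 * wa4 E') (u ^+ 6 * wa6 E').
  by rewrite /discf /wdisc /wb2 /wb4 /wb6 /wb8 /=; ring.
rewrite h1 h2 h3 h4 h6 /discf /wdisc /wb2 /wb4 /wb6 /wb8 /=; ring.
Qed.
Lemma dvdz_primeM (q : nat) (x y : int) : prime q ->
  (q%:Z %| x * y)%Z -> (q%:Z %| x)%Z \/ (q%:Z %| y)%Z.
Proof. by move=> pq; rewrite !dvdzE abszM Euclid_dvdM // => /orP. Qed.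

Lemma dvdz_add' (d x y : int) : (d %| x)%Z -> (d %| y)%Z -> (d %| x + y)%Z.
Proof. by move=> /dvdzP [k ->] /dvdzP [m ->]; apply/dvdzP; exists (k + m); ring. Qed.
Lemma dvdz_sub' (d x y : int) : (d %| x)%Z -> (d %| y)%Z -> (d %| x - y)%Z.
Proof. by move=> /dvdzP [k ->] /dvdzP [m ->]; apply/dvdzP; exists (k - m); ring. Qed.

Lemma key (q : nat) (A B : int) : prime q ->
  (q%:Z %| A ^+ 2 + A * B + B ^+ 2)%Z ->
  [\/ (q%:Z %| A)%Z, (q%:Z %| B)%Z | (q%:Z %| A + B)%Z] ->
  (q%:Z %| A)%Z /\ (q%:Z %| B)%Z.
Proof.
move=> pq hS [hA|hB|hAB].
- split => //.
  have : (q%:Z %| B * B)%Z.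
    have -> : B * B = (A ^+ 2 + A * B + B ^+ 2) - (A + B) * A by ring.
    by apply: dvdz_sub' => //; apply: dvdz_mull.
  by case/(dvdz_primeM pq).
- split => //.
  have : (q%:Z %| A * A)%Z.
    have -> : A * A = (A ^+ 2 + A * B + B ^+ 2) - (A + B) * B by ring.
    by apply: dvdz_sub' => //; apply: dvdz_mull.
  by case/(dvdz_primeM pq).
- have : (q%:Z %| A * B)%Z.
    have -> : A * B = (A + B) * (A + B) - (A ^+ 2 + A * B + B ^+ 2) by ring.
    by apply: dvdz_sub' => //; apply: dvdz_mull.
  case/(dvdz_primeM pq) => h.
    split => //; have -> : B = (A + B) - A by ring.
    exact: dvdz_sub'.
  split => //; have -> : A = (A + B) - B by ring.
  exact: dvdz_sub'.
Qed.

Lemma find_q (p alpha : nat) (a b c : int) :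
  prime p -> odd p -> (1 <= alpha)%N ->
  a != 0 -> b != 0 -> c != 0 ->
  a ^+ p + 2 ^+ alpha * b ^+ p + c ^+ p = 0 ->
  (a = -1 %[mod 4])%Z ->
  (a, b, c) <> (-1, 1, -1) ->
  exists q : nat, [/\ prime q, q != 2%N & (q%:Z %| a)%Z \/ (q%:Z %| c)%Z].
Proof.
move=> pp op al a0 b0 c0 eq am nt.
have [k ak] : exists k, a = 2 * k + 1 by exists (a %/ 2)%Z; lia.
have oddq : forall x : int, ~~ (2 %| `|x|)%N -> `|x|%N != 1%N -> x != 0 ->
    exists q : nat, [/\ prime q, q != 2%N & (q%:Z %| x)%Z].
  move=> x x2 x1 x0; exists (pdiv `|x|); split.
  - by apply: pdiv_prime; lia.
  - by apply/eqP => e; move: (pdiv_dvd `|x|); rewrite e (negPf x2).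
  - by rewrite dvdzE /= pdiv_dvd.
have [a1|a1] := eqVneq `|a|%N 1%N; last first.
  have [|q [? ? ?]] := oddq a _ a1 a0; last by exists q; split => //; left.
  by apply/negP => /dvdnP [m hm]; lia.
have {a1 ak} ae : a = -1 by lia.
subst a.
move: eq nt; case: alpha al => // al _.
case: p pp op => // p' _ op.
rewrite -[(-1) ^+ p'.+1]signr_odd op expr1.
have [ce|codd] : (c %% 2 = 0 \/ c %% 2 = 1)%Z by lia.
  have cm : c = 2 * (c %/ 2)%Z by lia.
  move: (c %/ 2)%Z cm => m cm.
  rewrite cm exprMn [2 ^+ p'.+1]exprS [2 ^+ al.+1]exprS => eq; exfalso; nia.
have [c1|c1] := eqVneq `|c|%N 1%N; last first.
  have [|q [? ? ?]] := oddq c _ c1 c0; last by exists q; split => //; right.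
  by apply/negP => /dvdnP [m' hm]; lia.
have [->|->] : c = 1 \/ c = -1 by lia.
  rewrite expr1n => eq; exfalso.
  have : 2 ^+ al.+1 * b ^+ p'.+1 = 0 by lia.
  by apply/eqP; rewrite mulf_eq0 negb_or !expf_eq0 /= (negPf b0).
rewrite -signr_odd op expr1 => eq nt.
have hpos : (1 <= 2 ^+ al :> int) by apply: exprn_ege1.
have bp1 : b ^+ p'.+1 = 1 by rewrite exprS in eq; nia.
have : `|b| ^+ p'.+1 == 1 by rewrite -normrX bp1.
rewrite pexpr_eq1 // => /eqP b1.
have [bb|bb] : b = 1 \/ b = -1 by lia.
  by exfalso; apply: nt; rewrite bb.
by move: bp1; rewrite bb -signr_odd op.
Qed.

Lemma dvdzN' (d m : int) : (d %| - m)%Z = (d %| m)%Z.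
Proof. by rewrite !dvdzE abszN. Qed.

Lemma logn_absM (q : nat) (x y : int) : x != 0 -> y != 0 ->
  logn q `|x * y| = (logn q `|x| + logn q `|y|)%N.
Proof. by move=> x0 y0; rewrite abszM lognM // absz_gt0. Qed.

Lemma logn_absX (q k : nat) (x : int) : logn q `|x ^+ k| = (k * logn q `|x|)%N.
Proof. by rewrite abszX lognX. Qed.

Lemma logn_ndvd (q m : nat) : ~~ (q %| m)%N -> logn q m = 0%N.
Proof. by move=> h; rewrite lognE (negPf h) !andbF. Qed.

Theorem mainTheorem4 (p alpha : nat) (a b c : int) :
  prime p -> odd p -> (1 <= alpha)%N -> (alpha < p)%N ->
  a != 0 -> b != 0 -> c != 0 ->
  gcdz (gcdz a b) c = 1%N ->
  a ^+ p + 2 ^+ alpha * b ^+ p + c ^+ p = 0 ->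
  (a = -1 %[mod 4])%Z ->
  (a, b, c) <> (-1, 1, -1) ->
  exists q : nat, [/\ prime q, q != 2%N &
    mult_reduction q (frey_curve ((a ^+ p)%:~R) ((2 ^+ alpha * b ^+ p)%:~R))].
Proof.
move=> pp op al alp a0 b0 c0 g eq am nt.
have [q [pq q2 hq]] := find_q pp op al a0 b0 c0 eq am nt.
exists q; split => //.
have p0 : (0 < p)%N by apply: prime_gt0.
set A := a ^+ p; set B := 2 ^+ alpha * b ^+ p.
have AB : A + B = - c ^+ p by rewrite /A /B; lia.
set K := 16 * (A ^+ 2 + A * B + B ^+ 2).
set D := 16 * A ^+ 2 * B ^+ 2 * (A + B) ^+ 2.
set E := frey_curve _ _.
have c4E : wc4 E = K%:~R by rewrite /E /K /wc4 /wb2 /wb4 /=; ring.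
have dE : wdisc E = D%:~R by rewrite /E /D /wdisc /wb2 /wb4 /wb6 /wb8 /=; ring.
have qA : (q%:Z %| A)%Z -> (q%:Z %| a)%Z.
  by rewrite /A !dvdzE abszX Euclid_dvdX // => /andP [].
have qB : (q%:Z %| B)%Z -> (q%:Z %| b)%Z.
  rewrite /B !dvdzE abszM !abszX Euclid_dvdM // !Euclid_dvdX // => /orP [/andP [h _]|/andP [] //].
  by move: h; rewrite dvdn_prime2 //= => /eqP e; move: q2; rewrite e.
have nqK : ~~ (q %| `|K|)%N.
  apply/negP => hK.
  have hS : (q%:Z %| A ^+ 2 + A * B + B ^+ 2)%Z.
    have : (q%:Z %| K)%Z by rewrite dvdzE.
    rewrite /K => /(dvdz_primeM pq) [|//].
    rewrite dvdzE /= => h16.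
    have : (q %| 2 ^ 4)%N by [].
    by rewrite Euclid_dvdX // dvdn_prime2 //= andbT => /eqP e; move: q2; rewrite e.
  have [hA' hB'] : (q%:Z %| A)%Z /\ (q%:Z %| B)%Z.
    apply: key => //; case: hq => h; first by apply: Or31; rewrite /A dvdz_exp.
    by apply: Or33; rewrite AB dvdzN' dvdz_exp.
  have hc : (q%:Z %| c ^+ p)%Z.
    by rewrite -dvdzN' -AB; apply: dvdz_add'.
  have : (q%:Z %| gcdz (gcdz a b) c)%Z.
    rewrite !dvdz_gcd qA // qB //=.
    by move: hc; rewrite !dvdzE abszX Euclid_dvdX // => /andP [].
  rewrite g dvdzE /= dvdn1 => /eqP e; move: pq; rewrite e.
  by [].
have A0 : A != 0 by rewrite /A expf_eq0 negb_and a0 orbT.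
have B0 : B != 0.
  by rewrite /B mulf_eq0 negb_or !expf_eq0 !negb_and b0 /= !orbT.
have ABn0 : A + B != 0 by rewrite AB oppr_eq0 expf_eq0 negb_and c0 orbT.
have D0 : D != 0.
  by rewrite /D !mulf_neq0 // expf_neq0.
have qD : (q %| `|D|)%N.
  have : (q%:Z %| D)%Z.
    rewrite /D; case: hq => h.
      by apply: dvdz_mulr; apply: dvdz_mulr; apply: dvdz_mull; apply: dvdz_exp => //; apply: dvdz_exp.
    by apply: dvdz_mull; apply: dvdz_exp => //; rewrite AB dvdzN' dvdz_exp.
  by rewrite dvdzE.
clearbody K D.
exists E; split.
- exists 1, 0, 0, 0; split; first exact: oner_neq0.
  by do !split; ring.
- split.
    split; apply: rep_qint; rewrite /E /=.
    + exact: (qrep_int pq 0).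
    + by apply: (qrep_sub pq); apply: (qrep_int pq).
    + exact: (qrep_int pq 0).
    + by apply: qrep_opp; apply: (qrep_mul pq); apply: (qrep_int pq).
    + exact: (qrep_int pq 0).
  move=> E' iso' [i1 i2 i3 i4 i6].
  have [u [u0 hc hd]] := wiso_inv iso'.
  have rc : qrep q (wc4 E').
    rewrite /wc4 /wb2 /wb4.
    apply: (qrep_sub pq); first apply: (qrep_exp pq).
      by apply: (qrep_add pq); [apply: (qrep_exp pq)|apply: (qrep_mul pq); [apply: (qrep_nat pq)|]];
        apply: qint_rep.
    apply: (qrep_mul pq); first exact: (qrep_nat pq).
    by apply: (qrep_add pq); [apply: (qrep_mul pq); [apply: (qrep_nat pq)|]|apply: (qrep_mul pq)];
      apply: qint_rep.
  case: rc => n [d [qd hn]].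
  have d0 : d != 0 by apply: contraNneq qd => ->; rewrite dvdn0.
  have n0 : n != 0.
    apply: contraNneq nqK => n0'.
    have c0' : wc4 E' = 0.
      apply/eqP; move: hn; rewrite n0' => /eqP.
      by rewrite mulf_eq0 intr_eq0 (negPf d0) orbF.
    have K0 : K = 0 by apply: (@intr_inj rat); rewrite -c4E -hc c0' mulr0.
    by rewrite K0 dvdn0.
  have hu : u * (denq u)%:~R = (numq u)%:~R by rewrite numqE.
  have nu0 : numq u != 0 by rewrite numq_eq0.
  have du0 : denq u != 0 by rewrite denq_eq0.
  have e1 : K * denq u ^+ 4 * d = numq u ^+ 4 * n.
    apply: (@intr_inj rat).
    transitivity (K%:~R * (denq u)%:~R ^+ 4 * (d%:~R : rat)); first by ring.
    transitivity ((numq u)%:~R ^+ 4 * (n%:~R : rat)); last by ring.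
    by rewrite -hn -hu -c4E -hc; ring.
  have le1 : logn q `|K * denq u ^+ 4 * d| = logn q `|numq u ^+ 4 * n| by rewrite e1.
  have K0 : K != 0 by apply: contraNneq nqK => ->; rewrite dvdn0.
  rewrite (@logn_absM q (K * denq u ^+ 4) d) ?mulf_neq0 ?expf_neq0 // (@logn_absM q K (denq u ^+ 4)) ?expf_neq0 // logn_absX in le1.
  rewrite (@logn_absM q (numq u ^+ 4) n) ?expf_neq0 // logn_absX in le1.
  rewrite (logn_ndvd nqK) (logn_ndvd qd) in le1.
  have e2 : wdisc E' * (numq u ^+ 12)%:~R = (D * denq u ^+ 12)%:~R.
    transitivity (wdisc E' * (numq u)%:~R ^+ 12); first by ring.
    transitivity (D%:~R * ((denq u)%:~R : rat) ^+ 12); last by ring.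
    by rewrite -hu -dE -hd; ring.
  have e3 : wdisc E * 1%:~R = D%:~R by rewrite dE mulr1.
  rewrite (qval_frac q _ _ e2).
  2: by rewrite mulf_neq0 // expf_neq0.
  2: by rewrite expf_neq0.
  rewrite (qval_frac q _ _ e3).
  2: exact: D0.
  2: exact: oner_neq0.
  rewrite (@logn_absM q D (denq u ^+ 12)) ?expf_neq0 // !logn_absX logn1.
  move: le1; clear; move: (logn q `|D|) (logn q `|denq u|) (logn q `|numq u|) (logn q `|n|) => x y z w.
  lia.
- by rewrite /qdvd dE numq_int.
- by rewrite /qdvd c4E numq_int.
Qed.
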